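(* Let $V$ be a finite set, let $d\ge 1$, let $R=(\le_1,\ldots,\le_d)$ be a $d$-representation on $V$, and let $R'=(\le_1,\ldots,\le_{d-1})$. Then the Hasse diagram of the inclusion poset of $\Sigma(R)\setminus\Sigma(R')$ admits a complete acyclic matching.
   Context: A $k$-representation on $V$ is a family of $k$ linear orders on $V$. For a linear order $\le$ on $V$, $x\in V$ and $F\subseteq V$, $x$ dominates $F$ in $\le$ if $f\le x$ for all $f\in F$; $x$ dominates $F$ in a representation if it dominates $F$ in at least one of its orders. For a representation $S$ on $V$, the supremum section $\Sigma(S)$ is the set of subsets $F\subseteq V$ such that every $v\in V$ dominates $F$ in $S$. When $d=1$, $R'$ has no orders and the same definition applies. The Hasse diagram of a finite poset $(P,\le)$ is the digraph with an arc $(u,w)$ whenever $w<u$ and there is no $z$ with $w<z<u$ (the transitive reduction). A matching $M$ of the Hasse diagram is a set of arcs no two sharing an endpoint; it is complete (perfect) if every element of $P$ is an endpoint of an arc of $M$; it is acyclic if the digraph obtained from the Hasse diagram by reversing the orientation of the arcs in $M$ has no directed cycle. *)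

(* Defs.v *)
From mathcomp Require Import all_boot.
Set Implicit Arguments. Unset Strict Implicit. Unset Printing Implicit Defensive.

Section Defs.
Variable V : finType.

Definition linear_order (le : rel V) : Prop :=
  [/\ reflexive le, antisymmetric le, transitive le & total le].

Definition representation (k : nat) (R : 'I_k -> rel V) : Prop :=
  forall i, linear_order (R i).

Definition dominates_in (le : rel V) (x : V) (F : {set V}) : bool :=
  [forall f in F, le f x].

Definition dominates (k : nat) (R : 'I_k -> rel V) (x : V) (F : {set V}) : bool :=
  [exists i : 'I_k, dominates_in (R i) x F].

Definition sup_section (k : nat) (R : 'I_k -> rel V) : {set {set V}} :=
  [set F : {set V} | [forall v : V, dominates R v F]].

Definition drop_last (k : nat) (R : 'I_k -> rel V) : 'I_(k.-1) -> rel V :=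
  fun i => R (widen_ord (leq_pred k) i).

Definition hasse_arc (P : {set {set V}}) (u w : {set V}) : bool :=
  [&& u \in P, w \in P, w \proper u &
      ~~ [exists z in P, (w \proper z) && (z \proper u)]].

Definition is_matching (P : {set {set V}}) (M : {set {set V} * {set V}}) : Prop :=
  (forall a, a \in M -> hasse_arc P a.1 a.2) /\
  (forall a b, a \in M -> b \in M -> a != b ->
     [/\ a.1 != b.1, a.1 != b.2, a.2 != b.1 & a.2 != b.2]).

Definition complete_matching (P : {set {set V}}) (M : {set {set V} * {set V}}) : Prop :=
  forall x, x \in P -> exists2 a, a \in M & (x == a.1) || (x == a.2).

Definition reversed_digraph (P : {set {set V}}) (M : {set {set V} * {set V}}) : rel {set V} :=
  fun x y => (hasse_arc P x y && ((x, y) \notin M)) || ((y, x) \in M).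

Definition acyclic_matching (P : {set {set V}}) (M : {set {set V} * {set V}}) : Prop :=
  ~ exists (x : {set V}) (s : seq {set V}),
      [/\ s != [::], path (reversed_digraph P M) x s & last x s = x].

End Defs.

(* Main.v *)
Require Import Defs.
From mathcomp Require Import all_boot.
From mathcomp Require Import zify.
Set Implicit Arguments. Unset Strict Implicit. Unset Printing Implicit Defensive.

Section Proof4.
Variable V : finType.

Lemma dom_toggle (le : rel V) x v (F : {set V}) : linear_order le ->
  ~~ dominates_in le x F ->
  dominates_in le v (x |: F) = dominates_in le v F /\
  dominates_in le v (F :\ x) = dominates_in le v F.
Proof.
case=> refl _ tr tot.
rewrite /dominates_in negb_forall_in => /exists_inP [f fF nfx].
have xf : le x f by move: (tot f x); rewrite (negbTE nfx).
have fx : f != x by apply: contraNneq nfx => ->; rewrite refl.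
split.
- apply/forall_inP/forall_inP => H g.
  + by move=> gF; apply: H; rewrite setU1r.
  + case/setU1P=> [->|gF]; last exact: H.
    exact: tr xf (H f fF).
- apply/forall_inP/forall_inP => H g.
  + have fv : le f v by apply: H; rewrite !inE fx fF.
    move=> gF; case: (eqVneq g x) => [->|gx]; first exact: tr xf fv.
    by apply: H; rewrite !inE gx gF.
  + by rewrite !inE => /andP [_ gF]; apply: H.
Qed.

Lemma dom_sub (le : rel V) v (F G : {set V}) : F \subset G ->
  dominates_in le v G -> dominates_in le v F.
Proof.
move=> /subsetP sFG /forall_inP H; apply/forall_inP => g gF; exact: H (sFG g gF).
Qed.

Lemma exists_min (le : rel V) (A : {set V}) : linear_order le -> A != set0 ->
  exists2 x, x \in A & [forall y in A, le x y].
Proof.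
case=> refl _ tr tot; case/set0Pn => a aA.
case: (arg_minnP (fun x => #|[set y | le y x]|) aA) => x xA Hmin.
exists x => //; apply/forall_inP => y yA.
case Lxy: (le x y) => //.
have Lyx : le y x by move: (tot x y); rewrite Lxy.
have := Hmin y yA; rewrite leqNgt => /negP; case.
apply: proper_card; apply/properP; split.
- by apply/subsetP => z; rewrite !inE => Lzy; exact: tr Lzy Lyx.
- by exists x; rewrite !inE ?refl ?Lxy.
Qed.

End Proof4.
Section Main.
Variables (V : finType) (d' : nat) (R : 'I_d'.+1 -> rel V).
Hypothesis hR : representation R.
Variable v0 : V.

Let L := R ord_max.
Let Q := drop_last R.
Let N (F : {set V}) := [set v | [forall j : 'I_d', ~~ dominates_in (Q j) v F]].
Let u (F : {set V}) := odflt v0 [pick x in N F | [forall y in N F, L x y]].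
Let P := sup_section R :\: sup_section (drop_last R).

Lemma hL : linear_order L. Proof. exact: hR. Qed.
Lemma hQ j : linear_order (Q j). Proof. exact: hR. Qed.

Lemma domQ v F : dominates (drop_last R) v F = (v \notin N F).
Proof.
rewrite inE negb_forall; apply: eq_existsb => j; by rewrite negbK.
Qed.

Lemma domR v F : dominates R v F = (v \notin N F) || dominates_in L v F.
Proof.
rewrite -domQ; apply/existsP/orP.
- case=> i; case: (unliftP ord_max i) => [j ->|->] H; last by right.
  left; apply/existsP; exists j.
  have E : lift ord_max j = widen_ord (leq_pred d'.+1) j.
    by apply: val_inj; rewrite /= /bump leqNgt ltn_ord.
  by rewrite /drop_last -E.
- case=> [/existsP [j H]|H]; last by exists ord_max.
  by exists (widen_ord (leq_pred d'.+1) j).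
Qed.

Lemma inP F : (F \in P) = (N F != set0) && [forall v in N F, dominates_in L v F].
Proof.
rewrite !inE; congr andb.
- rewrite negb_forall; apply/existsP/set0Pn => -[v H]; exists v.
  + by move: H; rewrite domQ negbK.
  + by rewrite domQ negbK.
- apply/forallP/forall_inP => H v.
  + by move=> vN; move: (H v); rewrite domR vN.
  + by rewrite domR; case vN: (v \in N F) => //=; apply: H.
Qed.

Lemma umin F : N F != set0 -> u F \in N F /\ forall y, y \in N F -> L (u F) y.
Proof.
move=> /(exists_min hL) [x xN xmin].
rewrite /u; case: pickP => [y /andP [yN /forall_inP ymin]|H] /=; first by [].
by move: (H x); rewrite xN xmin.
Qed.

Lemma N_toggle F x : x \in N F -> N (x |: F) = N F /\ N (F :\ x) = N F.
Proof.
rewrite inE => /forallP H; split; apply/setP => v; rewrite !inE;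
  apply: eq_forallb => j; have [E1 E2] := dom_toggle v (hQ j) (H j); by rewrite ?E1 ?E2.
Qed.

Lemma N_mono (F G : {set V}) : F \subset G -> N F \subset N G.
Proof.
move=> sFG; apply/subsetP => v; rewrite !inE => /forallP H; apply/forallP => j.
apply: contra (H j); exact: dom_sub.
Qed.

Lemma key F : F \in P ->
  [/\ u F |: F \in P, F :\ u F \in P, u (u F |: F) = u F & u (F :\ u F) = u F].
Proof.
rewrite inP => /andP [N0 /forall_inP Hd].
have [uN umin'] := umin N0.
have [E1 E2] := N_toggle uN.
rewrite /u E1 E2 -/(u F) !inP E1 E2 N0 /=; split => //.
- apply/forall_inP => v vN; apply/forall_inP => g; case/setU1P => [->|gF].
  + exact: umin'.
  + exact: (forall_inP (Hd v vN)).
- apply/forall_inP => v vN; apply: (dom_sub (F := F :\ u F) (G := F)); first exact: subD1set.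
  exact: Hd.
Qed.


Let M := [set p : {set V} * {set V} | [&& p.1 \in P, u p.1 \in p.1 & p.2 == p.1 :\ u p.1]].

Lemma Mfacts p : p \in M ->
  [/\ p.1 \in P, u p.1 \in p.1, p.2 = p.1 :\ u p.1 & u p.2 = u p.1].
Proof.
rewrite inE => /and3P [AP uA /eqP E]; have [_ _ _ E2] := key AP.
by rewrite E E2.
Qed.

Lemma arcM p : p \in M -> hasse_arc P p.1 p.2.
Proof.
move=> /Mfacts [AP uA E _]; have [_ BP _ _] := key AP.
rewrite /hasse_arc AP E BP properD1 //=.
apply/negP => /exists_inP [z zP /andP [pz zp]].
have h1 := proper_card pz; have h2 := proper_card zp.
move: h2; rewrite (cardsD1 (u p.1) p.1) uA /= => h2.
by move: h1; rewrite ltnNge -ltnS h2.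
Qed.

Lemma matchM : is_matching P M.
Proof.
split; first exact: arcM.
move=> a b aM bM ab.
have [aP ua Ea Eua] := Mfacts aM; have [bP ub Eb Eub] := Mfacts bM.
have nua : u a.1 \notin a.2 by rewrite Ea !inE eqxx.
have nub : u b.1 \notin b.2 by rewrite Eb !inE eqxx.
have K1 : a.1 != b.1.
  apply: contra ab => /eqP E; apply/eqP; apply: injective_projections => //.
  by rewrite Ea Eb E.
split => //.
- apply/eqP => E; move: ub nub; rewrite -Eub -E => ?; by rewrite ua.
- apply/eqP => E; move: ua nua; rewrite -Eua E => ?; by rewrite ub.
- apply/eqP => E; apply: (negP K1).
  by rewrite -(setD1K ua) -(setD1K ub) -Ea -Eb -Eua -Eub E.
Qed.

Lemma completeM : complete_matching P M.
Proof.
move=> F FP; have [k1 k2 k3 k4] := key FP.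
case uF: (u F \in F).
- exists (F, F :\ u F); last by rewrite /= eqxx.
  by rewrite inE /= FP uF eqxx.
- exists (u F |: F, F); last by rewrite /= eqxx orbT.
  by rewrite inE /= k1 k3 setU11 setU1K ?uF // eqxx.
Qed.

Let K := #|V| + 3.
Let Phi (X : {set V}) := K * #|N X| + #|X| + 2 * (u X \notin X).

Lemma edge x y : reversed_digraph P M x y -> Phi y < Phi x.
Proof.
case/orP.
- case/andP => /and4P [xP yP pyx ncov] nM.
  have sN := N_mono (proper_sub pyx).
  have cxy := proper_card pyx.
  case: (eqVneq (N y) (N x)) => EN.
  + have Eu : u y = u x by rewrite /u EN.
    rewrite /Phi EN Eu.
    case ux: (u x \in x); case uy: (u x \in y) => /=.
    * by rewrite !addn0 ltn_add2l.
    * exfalso; apply: (negP nM).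
      have [_ k2 _ _] := key xP.
      have sy : y \subset x :\ u x.
        apply/subsetP => z zy; rewrite !inE (subsetP (proper_sub pyx) z zy) andbT.
        by apply: contraFneq uy => <-.
      case: (eqVneq y (x :\ u x)) => [Ey|ney].
      -- by rewrite inE /= xP ux Ey eqxx.
      -- exfalso; apply: (negP ncov); apply/exists_inP; exists (x :\ u x) => //.
         by rewrite properEneq ney sy properD1.
    * by move: uy; rewrite (negbTE (contraFN (subsetP (proper_sub pyx) _) ux)).
    * by rewrite ltn_add2r ltn_add2l.
  + have pN : N y \proper N x by rewrite properEneq EN sN.
    have cN := proper_card pN.
    have cy : #|y| <= #|V| := max_card _.
    have h : K * #|N y| + K <= K * #|N x| by rewrite addnC -mulnS leq_mul2l cN orbT.
    rewrite /Phi; case: (u y \notin y); case: (u x \notin x); rewrite /K in h *; lia.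
- move=> /Mfacts /= [yP uy Ex Eux]; subst x.
  move: (yP); rewrite inP => /andP [N0 _]; have [uN _] := umin N0.
  have [_ EN] := N_toggle uN.
  rewrite /Phi Eux EN (cardsD1 (u y) y) uy !inE eqxx /=.
  lia.
Qed.

Lemma path_dec x s : path (reversed_digraph P M) x s -> s != [::] -> Phi (last x s) < Phi x.
Proof.
elim: s x => [//|y s IH] x /= /andP [exy ps] _.
case: s IH ps => [|z s] IH ps; first exact: edge exy.
exact: ltn_trans (IH y ps isT) (edge exy).
Qed.

Lemma acycM : acyclic_matching P M.
Proof.
move=> [x [s [s0 pth lst]]]; have := path_dec pth s0; by rewrite lst ltnn.
Qed.

Lemma main : exists M : {set {set V} * {set V}},
    let P := sup_section R :\: sup_section (drop_last R) in
    [/\ is_matching P M, complete_matching P M & acyclic_matching P M].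
Proof. exists M; split; [exact: matchM | exact: completeM | exact: acycM]. Qed.

End Main.

Theorem lemma4 (V : finType) (d : nat) (R : 'I_d -> rel V) :
  1 <= d -> representation R ->
  exists M : {set {set V} * {set V}},
    let P := sup_section R :\: sup_section (drop_last R) in
    [/\ is_matching P M, complete_matching P M & acyclic_matching P M].
Proof.
case: d R => [//|d'] R _ hR.
case: (pickP (fun _ : V => true)) => [v0 _|V0]; first exact: (@main V d' R hR v0).
have P0 : forall F, F \notin sup_section R :\: sup_section (drop_last R).
  move=> F; rewrite !inE negb_and negbK; apply/orP; left.
  by apply/forallP => v; have := V0 v.
exists set0; split.
- by split => [a|a b]; rewrite inE.
- by move=> x; rewrite (negbTE (P0 x)).
- move=> [x [s [s0 pth _]]]; case: s s0 pth => [//|y s] _ /= /andP [e _].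
  move: e; rewrite /reversed_digraph /hasse_arc (negbTE (P0 x)) /= inE. done.

Qed.
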